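(* Let $M$ and $M'$ be matroids on the same finite ground set $S$, both of rank $r$, such that the circuits of $M$ of cardinality at most $r$ are exactly the circuits of $M'$ of cardinality at most $r$. Then $M=M'$. *)

(* Defs.v *)
From mathcomp Require Import all_boot.
Set Implicit Arguments. Unset Strict Implicit. Unset Printing Implicit Defensive.

Record matroid (T : finType) := Matroid {
  indep : {set T} -> bool;
  indep0 : indep set0;
  indep_sub : forall A B : {set T}, B \subset A -> indep A -> indep B;
  indep_exchange : forall A B : {set T}, indep A -> indep B -> #|A| < #|B| ->
      exists2 x, x \in B :\: A & indep (x |: A)
}.

Definition mrank (T : finType) (M : matroid T) : nat :=
  \max_(A : {set T} | indep M A) #|A|.

Definition circuit (T : finType) (M : matroid T) (C : {set T}) : Prop :=
  ~~ indep M C /\ (forall D : {set T}, D \proper C -> indep M D).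

(* Main.v *)
Require Import Defs.
From mathcomp Require Import all_boot.
From Stdlib Require Import FunctionalExtensionality ProofIrrelevance.
Set Implicit Arguments. Unset Strict Implicit.

Lemma dep_circuit (T : finType) (M : matroid T) (A : {set T}) :
  ~~ indep M A -> exists2 C : {set T}, C \subset A & circuit M C.
Proof.
move=> hA.
have [C hmin hCA] := @minset_exists T (fun X => ~~ indep M X) A hA.
exists C => //; split; first exact: (minsetp hmin).
move=> D hDC; apply/negPn/negP => hD.
have E := minsetinf hmin hD (proper_sub hDC).
by rewrite E properxx in hDC.
Qed.

Lemma indep_le (T : finType) (M : matroid T) (A : {set T}) :
  indep M A -> #|A| <= mrank M.
Proof. by move=> h; rewrite /mrank; exact: (@leq_bigmax_cond _ (indep M) (fun B : {set T} => #|B|) A h). Qed.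

Lemma half (T : finType) (M M' : matroid T) (r : nat) :
  mrank M = r -> mrank M' = r ->
  (forall C : {set T}, #|C| <= r -> (circuit M C <-> circuit M' C)) ->
  forall A, indep M' A -> indep M A.
Proof.
move=> hM hM' hC A hA; apply/negPn/negP => hd.
have [C hCA hc] := dep_circuit hd.
have hle : #|C| <= r by rewrite -hM'; apply: leq_trans (subset_leq_card hCA) (indep_le hA).
have [hc' _] := (proj1 (hC C hle) hc).
by move/negP: hc'; apply; apply: indep_sub hA.
Qed.

Theorem proposition2p2 (T : finType) (M M' : matroid T) (r : nat) :
  mrank M = r -> mrank M' = r ->
  (forall C : {set T}, #|C| <= r -> (circuit M C <-> circuit M' C)) ->
  M = M'.
Proof.
move=> hM hM' hC.
have E : indep M = indep M'.
  apply: functional_extensionality => A; apply/idP/idP.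
  - apply: (half hM' hM) => C hle; by split => /hC; apply.
  - exact: (half hM hM' hC).
case: M hM hC E => i0 a b c; case: M' hM' => i0' a' b' c' /= _ _ _ E.
subst i0'.
by rewrite (proof_irrelevance _ a a') (proof_irrelevance _ b b') (proof_irrelevance _ c c').
Qed.
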